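(* Let $X$ be a topologically complete space and $\mathcal A$ a family of closed, locally finite, normal covers of $X$ satisfying conditions (I) and (II), and let $\Lambda$, $\mathrm{cov}_\lambda$, $F_\lambda$, $F_\infty$, $\wedge$ be as in the context. Then: (1) for each open subset $U$ of $X$, each $x\in U$ and each positive integer $n$, there exists $\lambda\in\Lambda$ such that $\bigcup\mathrm{star}^n_{\mathrm{cov}_\lambda}(x)\subset U$; (2) for each $z\in F_\infty$, the set $\bigcap_{\lambda\in\Lambda}\wedge z(\lambda)$ consists of exactly one point.
   Context: A topologically complete space is a Tychonoff space complete with respect to its finest uniformity. A closed, locally finite, normal cover $\alpha$ of $X$ is a locally finite cover by closed sets admitting a partition of unity $\{\phi_{\alpha,V}:V\in\alpha\}$ with $\mathrm{cl}(\phi_{\alpha,V}^{-1}((0,1]))\subset\mathrm{int}(V)$, $\sum_V\phi_{\alpha,V}=1$. For a cover $\alpha$ and $S\subset X$: $\mathrm{star}_\alpha(S)=\{V\in\alpha:V\cap S\neq\emptyset\}$, $\mathrm{star}^1_\alpha=\mathrm{star}_\alpha$, $\mathrm{star}^{n+1}_\alpha(S)=\{V\in\alpha:\ V\cap W\neq\emptyset\text{ for some }W\in\mathrm{star}^n_\alpha(S)\}$; $\mathrm{star}_\alpha(x)=\mathrm{star}_\alpha(\{x\})$; $\bigcup$ of a collection is the union of its members. Conditions: (I) for each open $U\subset X$ and $x\in U$ there is $\alpha\in\mathcal A$ with $\bigcup\mathrm{star}_\alpha(x)\subset U$; (II) if $f(\alpha)\in\alpha$ is chosen for each $\alpha\in\mathcal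 A$ and $\{f(\alpha)\}$ has the finite intersection property, then $\bigcap_\alpha f(\alpha)\neq\emptyset$. Construction: $\Lambda$ is the set of finite subsets of $\mathcal A$ directed by inclusion. For $\lambda\in\Lambda$, $N^{(0)}_\lambda$ is the set of functions $v$ on $\lambda$ with $v(\alpha)\in\alpha$ for all $\alpha\in\lambda$ and $\wedge v:=\bigcap_{\alpha\in\lambda}v(\alpha)\neq\emptyset$ (empty intersection meaning $X$); $\mathrm{cov}_\lambda=\{\wedge v: v\in N^{(0)}_\lambda\}$. $F_\lambda$ is the simplicial complex (weak topology) with vertex set $N^{(0)}_\lambda$ in which a finite set $\{v_1,\dots,v_k\}$ spans a simplex iff $\wedge v_i\cap\wedge v_j\neq\emptyset$ for all $i,j$. For $\lambda\subset\mu$, $\pi^\mu_\lambda:F_\mu\to F_\lambda$ is the simplicial map sending each vertex $v$ to its restriction $v|_\lambda$. $F_\infty=\varprojlim(F_\lambda,\pi^\mu_\lambda;\Lambda)$ with projections $\pi_\lambda$, and $z(\lambda)=\pi_\lambda(z)$. For $a\in F_\lambda$, $\sigma_\lambda(a)$ denotes the unique simplex of $F_\lambda$ containing $a$ in its interior (all barycentric coordinates positive), and $\wedge a=\bigcap\{\wedge v: v\text{ a vertex of }\sigma_\lambda(a)\}$ (possibly empty). *)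

(* Defs.v *)
From mathcomp Require Import all_boot all_order all_algebra.
From mathcomp Require Import all_classical all_reals all_analysis.
From mathcomp Require Import Rstruct Rstruct_topology.
Set Implicit Arguments. Unset Strict Implicit. Unset Printing Implicit Defensive.
Import Order.TTheory GRing.Theory Num.Theory.
Local Open Scope classical_set_scope.
Local Open Scope ring_scope.

Definition Rr : realType := Rdefinitions.R.

Section Defs.
Variable X : topologicalType.

Definition tychonoff : Prop :=
  (forall x y : X, x <> y -> exists U : set X, open U /\ U x /\ ~ U y) /\
  (forall (B : set X) (x : X), closed B -> ~ B x ->
     exists f : X -> Rr, continuous f /\ (forall y, 0 <= f y <= 1) /\
       f x = 0 /\ (forall y, B y -> f y = 1)).

(** Continuous pseudometrics; they generate the finest (universal) uniformity. *)
Definition cont_pseudometric (d : X -> X -> Rr) : Prop :=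
  (forall x y, 0 <= d x y) /\ (forall x, d x x = 0) /\
  (forall x y, d x y = d y x) /\ (forall x y z, d x z <= d x y + d y z) /\
  continuous (fun p : (X * X)%type => d p.1 p.2).

Definition fine_cauchy (F : set_system X) : Prop :=
  forall d, cont_pseudometric d -> forall e : Rr, 0 < e ->
    exists B, F B /\ (forall x y, B x -> B y -> d x y < e).

Definition topologically_complete : Prop :=
  tychonoff /\
  forall F : set_system X, ProperFilter F -> fine_cauchy F ->
    exists x : X, nbhs x `<=` F.

Definition locally_finite (al : set (set X)) : Prop :=
  forall x : X, exists U : set X, open U /\ U x /\
    finite_set [set V | al V /\ (V `&` U) !=set0].

Definition closed_lf_normal_cover (al : set (set X)) : Prop :=
  (forall x : X, exists V, al V /\ V x) /\
  (forall V, al V -> closed V) /\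
  locally_finite al /\
  exists phi : set X -> X -> Rr,
    (forall V, al V -> continuous (phi V)) /\
    (forall V x, al V -> 0 <= phi V x) /\
    (forall V, al V -> closure [set x | 0 < phi V x <= 1] `<=` interior V) /\
    (forall x, \sum_(V \in al) phi V x = 1).

(** star_al(S) and iterated stars; starn al 0 S = [set S], so starn al 1 = star. *)
Definition star (al : set (set X)) (S : set X) : set (set X) :=
  [set V | al V /\ (V `&` S) !=set0].

Fixpoint starn (al : set (set X)) (n : nat) (S : set X) : set (set X) :=
  match n with
  | 0%N => [set S]
  | n'.+1 => [set V | al V /\ exists W, starn al n' S W /\ (V `&` W) !=set0]
  end.

Definition condI (A : set (set (set X))) : Prop :=
  forall (U : set X) (x : X), open U -> U x ->
    exists al, A al /\ \bigcup_(V in star al [set x]) V `<=` U.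

Definition in_Lambda (A : set (set (set X))) (l : set (set (set X))) : Prop :=
  finite_set l /\ l `<=` A.

Definition condII (A : set (set (set X))) : Prop :=
  forall f : set (set X) -> set X,
    (forall al, A al -> al (f al)) ->
    (forall l, in_Lambda A l -> (\bigcap_(al in l) f al) !=set0) ->
    (\bigcap_(al in A) f al) !=set0.

(** Vertices of F_l: functions on l (normalised to setT outside l). *)
Definition wedge (l : set (set (set X))) (v : set (set X) -> set X) : set X :=
  \bigcap_(al in l) v al.

Definition vertex (l : set (set (set X))) (v : set (set X) -> set X) : Prop :=
  (forall al, l al -> al (v al)) /\ (forall al, ~ l al -> v al = setT) /\
  wedge l v !=set0.

Definition cov (l : set (set (set X))) : set (set X) :=
  [set wedge l v | v in vertex l].

Definition restr (l : set (set (set X))) (v : set (set X) -> set X) : set (set X) -> set X :=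
  fun al => if `[< l al >] then v al else setT.

(** Points of F_l, given by barycentric coordinates. *)
Definition supp (a : (set (set X) -> set X) -> Rr) : set (set (set X) -> set X) :=
  [set v | a v != 0].

Definition point (l : set (set (set X))) (a : (set (set X) -> set X) -> Rr) : Prop :=
  (forall v, 0 <= a v) /\ finite_set (supp a) /\ supp a `<=` vertex l /\
  (forall v w, supp a v -> supp a w -> (wedge l v `&` wedge l w) !=set0) /\
  \sum_(v \in [set: set (set X) -> set X]) a v = 1.

(** Linear extension of the vertex map v |-> v|_l. *)
Definition proj (l : set (set (set X))) (a : (set (set X) -> set X) -> Rr) :
    (set (set X) -> set X) -> Rr :=
  fun w => \sum_(v \in [set v | restr l v = w]) a v.

Definition Finf (A : set (set (set X)))
    (z : set (set (set X)) -> (set (set X) -> set X) -> Rr) : Prop :=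
  (forall l, in_Lambda A l -> point l (z l)) /\
  (forall l m, in_Lambda A l -> in_Lambda A m -> l `<=` m -> z l = proj l (z m)).

Definition wedgept (l : set (set (set X))) (a : (set (set X) -> set X) -> Rr) : set X :=
  \bigcap_(v in supp a) wedge l v.

End Defs.

(* Main.v *)
Require Import Defs.
From mathcomp Require Import all_boot all_order all_algebra.
From mathcomp Require Import all_classical all_reals all_analysis.
From mathcomp Require Import Rstruct Rstruct_topology.
Local Open Scope classical_set_scope.
Local Open Scope ring_scope.

Import Order.TTheory GRing.Theory Num.Theory.
Set Implicit Arguments.
Section Helpers.
Variable X : topologicalType.
Implicit Types (l m : set (set (set X))) (v w : set (set X) -> set X).

Lemma wedge_restr l m v : l `<=` m -> wedge m v `<=` wedge l (restr l v).
Proof.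
move=> lm y Hy al lal; rewrite /restr asboolT //; exact: Hy al (lm _ lal).
Qed.

Lemma restr_in l v al : l al -> restr l v al = v al.
Proof. by move=> h; rewrite /restr asboolT. Qed.

Lemma vertex_restr l m v : l `<=` m -> vertex m v -> vertex l (restr l v).
Proof.
move=> lm [h1 [h2 [p hp]]]; split; [|split].
- by move=> al lal; rewrite restr_in //; exact: h1 al (lm _ lal).
- by move=> al nl; rewrite /restr asboolF.
- by exists p; exact: wedge_restr hp.
Qed.

Lemma cov_mono l m V : l `<=` m -> cov m V -> exists2 V0, cov l V0 & V `<=` V0.
Proof.
move=> lm [v hv <-]; exists (wedge l (restr l v)); last exact: wedge_restr.
by exists (restr l v) => //; exact: vertex_restr hv.
Qed.

Lemma starn_mono l m n S W : l `<=` m -> starn (cov m) n S W ->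
  exists2 W0, starn (cov l) n S W0 & W `<=` W0.
Proof.
move=> lm; elim: n W => [|n IH] W /=.
  by move=> ->; exists S.
move=> [cW [W' [hW' [p [Wp W'p]]]]].
have [W0 h0 s0] := IH _ hW'.
have [V0 c0 sV0] := cov_mono lm cW.
exists V0 => //; split => //; exists W0; split => //; exists p; split.
- exact: sV0.
- exact: s0.
Qed.

Lemma point_supp l a : Defs.point l a -> exists v, supp a v.
Proof.
move=> [_ [_ [_ [_ hs]]]]; apply: contrapT => hn.
have : \sum_(v \in [set: set (set X) -> set X]) a v = 0.
  apply: fsbig1 => v _; apply: contrapT => hv; apply: hn; exists v; exact/eqP.
by rewrite hs => /eqP; rewrite oner_eq0.
Qed.

Lemma proj_lift l b w : Defs.proj l b w != 0 -> exists2 v, supp b v & restr l v = w.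
Proof.
move=> h; apply: contrapT => hn; move: h; rewrite /Defs.proj fsbig1 ?eqxx //.
move=> v /= hv; apply: contrapT => hb; apply: hn; exists v => //; exact/eqP.
Qed.

Lemma proj_restr_supp l m b v : Defs.point m b -> supp b v -> supp (Defs.proj l b) (restr l v).
Proof.
move=> [hb0 [hfin _]] hv; rewrite /supp /Defs.proj /=.
rewrite fsbig_supp; apply/negP => /eqP h0.
have fin : finite_set ([set v0 | restr l v0 = restr l v] `&` b @^-1` [set~ 0]).
  apply: sub_finite_set hfin => u [_ hu]; exact/eqP.
have := pfsumr_eq0 fin (fun i _ => hb0 i) h0 (conj erefl _).
have hv' : b v <> 0 by apply/eqP.
by move=> /(_ hv').
Qed.


Lemma part1 (A : set (set (set X))) :
  (forall al, A al -> closed_lf_normal_cover al) -> condI A ->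
  forall n (U : set X) (x : X), open U -> U x ->
     exists l, in_Lambda A l /\ \bigcup_(V in starn (cov l) n [set x]) V `<=` U.
Proof.
move=> hA hI; elim=> [|n IH] U x oU Ux.
  exists set0; split; first by split; [exact: finite_set0|exact: sub0set].
  by move=> y [V /= -> ->].
have [al [Aal Hal]] := hI U x oU Ux.
have [_ [clo [lf _]]] := hA al Aal.
have [U1 [oU1 [U1x finK]]] := lf x.
pose K := [set V | al V /\ (V `&` U1) !=set0].
pose B := \bigcup_(V in [set V | K V /\ ~ V x]) V.
have cB : closed B.
  apply: closed_bigcup; first by apply: sub_finite_set finK => V [].
  by move=> V [[alV _] _]; exact: clo.
pose O := U1 `&` ~` B.
have oO : open O by apply: openI => //; rewrite openC.
have Ox : O x by split => // -[V [_ nVx] Vx].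
have [l0 [[fl0 sl0] H0]] := IH O x oO Ox.
exists (l0 `|` [set al]); split.
  split; first by rewrite finite_setU; split => //; exact: finite_set1.
  by move=> b [/sl0 //| ->].
move=> y [V [cV [W [hW [p [Vp Wp]]]]] Vy].
have lm : l0 `<=` l0 `|` [set al] by move=> b hb; left.
have [W0 hW0 sW0] := starn_mono n _ _ lm hW.
have Op : O p by apply: H0; exists W0 => //; exact: sW0.
case: cV => v [hv1 _] Vdef.
have lal : (l0 `|` [set al]) al by right.
have alv : al (v al) := hv1 al lal.
have vp : v al p by rewrite -Vdef in Vp; exact: Vp al lal.
have vx : v al x.
  apply: contrapT => nvx; case: Op => U1p; apply; exists (v al) => //.
  by split => //; split => //; exists p.
apply: Hal; exists (v al); first by split => //; exists x.
by rewrite -Vdef in Vy; exact: Vy al lal.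
Qed.


Lemma part2 (A : set (set (set X))) :
  topologically_complete X ->
  (forall al, A al -> closed_lf_normal_cover al) ->
  condI A -> condII A ->
  forall z, Finf A z ->
     exists x : X, [set y | forall l, in_Lambda A l -> wedgept l (z l) y] = [set x].
Proof.
move=> [[hT1 _] _] hA hI hII z [hz1 hz2].
pose Lam := in_Lambda A.
have [vm hvm] : exists vm : set (set (set X)) -> (set (set X) -> set X),
    forall m, Lam m -> supp (z m) (vm m).
  suff /choice [f hf] : forall m, exists v, Lam m -> supp (z m) v by exists f.
  move=> m; case: (pselect (Lam m)) => hm; last by exists (fun _ => setT).
  by have [v hv] := point_supp (hz1 m hm); exists v.
pose F0 := fun P : set (set (set (set X))) =>
  exists l0, Lam l0 /\ forall m, Lam m -> l0 `<=` m -> P m.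
have FF0 : ProperFilter F0.
  apply: Build_ProperFilter_ex.
    by move=> P [l0 [hl0 H]]; exists l0; exact: H.
  split.
  - by exists set0; split => //; split; [exact: finite_set0|exact: sub0set].
  - move=> P Q [l0 [[f0 s0] H0]] [l1 [[f1 s1] H1]]; exists (l0 `|` l1); split.
      split; first by rewrite finite_setU.
      by move=> b [/s0|/s1].
    by move=> m hm slm; split; [apply: H0 | apply: H1] => // b hb; apply: slm;
      [left|right].
  - by move=> P Q PQ [l0 [hl0 H]]; exists l0; split => // m hm hl; apply: PQ; exact: H.
have [G [UG FG]] := ultraFilterLemma FF0.
have PG : ProperFilter G := @ultra_proper _ _ UG.
have GLam : forall l, Lam l -> G [set m | Lam m /\ l `<=` m].
  by move=> l hl; apply: FG; exists l; split.
pose S al V := [set m | Lam m /\ m al /\ vm m al = V].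
have [g hg] : exists g : set (set X) -> set X, forall al, A al -> G (S al (g al)).
  suff /choice [f hf] : forall al, exists V, A al -> G (S al V) by exists f.
  move=> al; case: (pselect (A al)) => hal; last by exists setT.
  apply: contrapT => hn.
  have hc : forall V, G (~` S al V).
    move=> V; case: (in_ultra_setVsetC (S al V) UG) => // h.
    by exfalso; apply: hn; exists V.
  have Lal : Lam [set al] by split; [exact: finite_set1| move=> b ->].
  have [_ [fsupp _]] := hz1 _ Lal.
  pose Q := [set w al | w in supp (z [set al])].
  have /finite_fsetP [D hD] : finite_set Q := finite_image _ fsupp.
  have G1 := @filter_bigI _ _ D (fun V => ~` S al V) G (@filter_filter _ G PG) (fun V _ => hc V).
  have [m [[hm lm] hmD]] := filter_ex (filterI (GLam _ Lal) G1).
  have hs := proj_restr_supp [set al] (hz1 m hm) (hvm m hm).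
  rewrite -(hz2 _ _ Lal hm lm) in hs.
  have QV : Q (vm m al) by exists (restr [set al] (vm m)) => //; rewrite restr_in.
  rewrite hD in QV; apply: (hmD (vm m al) QV); split => //; split => //; exact: lm.
have gin : forall al, A al -> al (g al).
  move=> al hal; have [m [hm [mal e]]] := filter_ex (hg al hal).
  rewrite -e; have [_ [_ [sv _]]] := hz1 m hm.
  exact: (sv _ (hvm m hm)).1 al mal.
have fip : forall l, in_Lambda A l -> (\bigcap_(al in l) g al) !=set0.
  move=> l hl; have [D hD] := finite_fsetP.1 hl.1.
  have G1 := @filter_bigI _ _ D (fun al => S al (g al)) G (@filter_filter _ G PG)
    (fun al hal => hg al (hl.2 al ltac:(rewrite hD; exact: hal))).
  have [m [[hm lm] hmD]] := filter_ex (filterI (GLam _ hl) G1).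
  have [_ [_ [sv _]]] := hz1 m hm.
  have [_ [_ [p hp]]] := sv _ (hvm m hm).
  exists p => al lal.
  have [_ [_ e]] : S al (g al) m by apply: hmD; rewrite -hD.
  rewrite -e; exact: hp al (lm _ lal).
have [x hx] := hII g gin fip.
have main : forall l, Lam l -> wedgept l (z l) x.
  move=> l hl w hw al lal.
  have [_ [_ [svl _]]] := hz1 l hl.
  have wal : al (w al) := (svl _ hw).1 al lal.
  have Aal := hl.2 al lal.
  have [_ [clo _]] := hA al Aal.
  apply: contrapT => nx.
  have oU : open (~` w al) by rewrite openC; exact: clo.
  have [be [Abe Hbe]] := hI _ x oU nx.
  have Lb : Lam (l `|` [set be]).
    split; first by rewrite finite_setU; split; [exact: hl.1 | exact: finite_set1].
    by move=> b [/hl.2 // | ->].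
  have [m [[hm lm] [_ [mbe e]]]] := filter_ex (filterI (GLam _ Lb) (hg be Abe)).
  have llm : l `<=` m by move=> b hb; apply: lm; left.
  have hw' : Defs.proj l (z m) w != 0 by rewrite -(hz2 _ _ hl hm llm).
  have [w' hw'1 hw'2] := @proj_lift l (z m) w hw'.
  have [_ [_ [_ [pw _]]]] := hz1 m hm.
  have [y [y1 y2]] := pw _ _ hw'1 (hvm m hm).
  have ywal : w al y by rewrite -hw'2 restr_in //; exact: y1 al (llm _ lal).
  have : (~` w al) y.
    apply: Hbe; exists (g be); last by rewrite -e; exact: y2 be mbe.
    split; [exact: gin | exists x; split => //; exact: hx be Abe].
  by [].
exists x; apply/seteqP; split => [y hy|y ->]; last exact: main.
apply: contrapT => nyx.
have [U [oU [Uy nUx]]] := hT1 y x nyx.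
have [be [Abe Hbe]] := hI _ y oU Uy.
have Lb : Lam [set be] by split; [exact: finite_set1| move=> b ->].
have [w hw] := point_supp (hz1 _ Lb).
have [_ [_ [svl _]]] := hz1 _ Lb.
have wb : be (w be) := (svl _ hw).1 be erefl.
apply: nUx; apply: Hbe; exists (w be).
  split => //; exists y; split => //; exact: hy _ Lb w hw be erefl.
exact: main _ Lb w hw be erefl.
Qed.


End Helpers.

Theorem lemma2p2 (X : topologicalType) (A : set (set (set X))) :
  topologically_complete X ->
  (forall al, A al -> closed_lf_normal_cover al) ->
  condI A -> condII A ->
  (forall (U : set X) (x : X) (n : nat), open U -> U x -> (0 < n)%N ->
     exists l, in_Lambda A l /\ \bigcup_(V in starn (cov l) n [set x]) V `<=` U) /\
  (forall z, Finf A z ->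
     exists x : X, [set y | forall l, in_Lambda A l -> wedgept l (z l) y] = [set x]).
Proof.
move=> hT hA hI hII; split.
  by move=> U x n oU Ux _; exact: part1 hA hI n U x oU Ux.
exact: part2 hT hA hI hII.
Qed.
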